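(* Let $\Lambda\subset\mathbb{Z}^n$ be an antichain lattice and $A\subset\mathbb{Z}^n$ a generic $\Lambda$-finite set. Then the algebraic Scarf complex $\mathcal{F}_{N(A)}$ is isomorphic to a subcomplex of the hull complex $\mathrm{hull}(A)$; that is, for all sufficiently large $t$, for every $\sigma\in N(A)$ the set $\mathrm{conv}(E_t(\sigma))$ is a face of $\mathcal{P}_t(A)$, and $\sigma\mapsto E_t(\sigma)$ identifies $N(A)$ (with labels $\vee\sigma$) with a labeled subcomplex of $\mathrm{hull}(A)$.
   Context: Notation: $\le$, $\ll$, $\vee$ componentwise on $\mathbb{Z}^n$; antichain lattice = subgroup of $\mathbb{Z}^n$ whose distinct elements are pairwise incomparable. $T_\eta=\eta-\mathbb{N}^n$, $T^o_\eta=\{\beta:\beta\ll\eta\}$; the $X$-face ($\emptyset\neq X\subseteq[n]$) of $T_\eta$ is $\{\alpha\in T_\eta:\alpha_i=\eta_i\ \forall i\in X\}$. $A$ is generic if whenever $T^o_\eta\cap A=\emptyset$, each face of $T_\eta$ contains at most one point of $A$. $A$ is $\Lambda$-finite if $A=A+\Lambda$ and $A=A_0+\Lambda$ for a finite $A_0$. A finite nonempty $B\subseteq A$ is strongly neighborly if $B'\subseteq A$, $\vee B'=\vee B$ imply $B'=B$; $N(A)$ is the simplicial complex of strongly neighborly sets, each face $\sigma$ labeled by $\vee\sigma$. The algebraic Scarf complex $\mathcal{F}_{N(A)}$: free $S=k[x_1,\dots,x_n]$-modules with bases $\{e_\sigma:\sigma\in N(A),|\sigma|=i+1\}$ and differential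 $e_\sigma\mapsto\sum_j(-1)^jX^{\vee\sigma-\vee\partial_j\sigma}e_{\partial_j\sigma}$. For real $t>1$ and $\alpha\in\mathbb{Z}^n$, $E_t(\alpha)=(t^{\alpha_1},\dots,t^{\alpha_n})$, $E_t(F)=\{E_t(\alpha):\alpha\in F\}$, $\mathcal{P}_t(A)=\mathbb{R}^n_{\ge0}+\mathrm{conv}(E_t(A))$. $\mathrm{hull}_t(A)$ is the collection of $F\subseteq A$ such that $\mathrm{conv}(E_t(F))$ is a face of $\mathcal{P}_t(A)$ (labeled by $\vee F$); for generic $A$ this is independent of $t$ for $t$ large, and $\mathrm{hull}(A)$ denotes this stable complex. *)

(* Defs.v *)
From HB Require Import structures.
From mathcomp Require Import all_boot all_order all_algebra.
From mathcomp Require Import finmap.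
From mathcomp Require Import reals.
Set Implicit Arguments. Unset Strict Implicit. Unset Printing Implicit Defensive.
Import Order.TTheory GRing.Theory Num.Theory.
Local Open Scope ring_scope.


Definition zvec (n : nat) := {ffun 'I_n -> int}.

Definition zle n (a b : zvec n) : Prop := forall i, a i <= b i.

Definition vee n (B : {fset zvec n}) : zvec n :=
  [ffun i => \big[Num.max/(head 0 (B : seq (zvec n))) i]_(a <- (B : seq (zvec n))) a i].

Definition antichain_lattice n (L : zvec n -> Prop) : Prop :=
  [/\ L 0,
      (forall x y, L x -> L y -> L (x + y)),
      (forall x, L x -> L (- x)) &
      (forall x y, L x -> L y -> x <> y -> ~ zle x y)].

Definition lattice_finite n (L A : zvec n -> Prop) : Prop :=
  (forall a l, A a -> L l -> A (a + l)) /\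
  (exists A0 : {fset zvec n},
      forall x, A x <-> exists2 a0, a0 \in A0 & exists2 l, L l & x = a0 + l).

Definition generic n (A : zvec n -> Prop) : Prop :=
  forall eta : zvec n,
    (forall b, A b -> ~ (forall i, b i < eta i)) ->
    forall X : {set 'I_n}, X != set0 ->
    forall a b, A a -> A b ->
      zle a eta -> zle b eta ->
      (forall i, i \in X -> a i = eta i) ->
      (forall i, i \in X -> b i = eta i) ->
      a = b.

(* strongly neighborly sets; N(A) is the collection of these *)
Definition strongly_neighborly n (A : zvec n -> Prop) (B : {fset zvec n}) : Prop :=
  [/\ B != fset0%fset,
      (forall a, a \in B -> A a) &
      (forall B' : {fset zvec n}, B' != fset0%fset -> (forall a, a \in B' -> A a) ->
         vee B' = vee B -> B' = B)].

Definition Et (R : realType) n (t : R) (a : zvec n) : 'I_n -> R :=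
  fun i => t ^ (a i).

Definition dotR (R : realType) n (w x : 'I_n -> R) : R := \sum_i w i * x i.

Definition in_conv (R : realType) n (t : R) (S : zvec n -> Prop) (x : 'I_n -> R) : Prop :=
  exists F : {fset zvec n},
    (forall a, a \in F -> S a) /\
    exists lam : zvec n -> R,
      [/\ (forall a, a \in F -> 0 <= lam a),
          \sum_(a <- (F : seq (zvec n))) lam a = 1 &
          forall i, x i = \sum_(a <- (F : seq (zvec n))) lam a * Et t a i].

(* P_t(A) = R^n_{>=0} + conv(E_t(A)) *)
Definition Pt (R : realType) n (t : R) (A : zvec n -> Prop) (x : 'I_n -> R) : Prop :=
  exists2 y, in_conv t A y & forall i, y i <= x i.

(* Q is a (nonempty, exposed) face of the convex set P *)
Definition is_face (R : realType) n (P Q : ('I_n -> R) -> Prop) : Prop :=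
  exists (w : 'I_n -> R) (c : R),
    [/\ (forall x, P x -> c <= dotR w x),
        (forall x, Q x <-> P x /\ dotR w x = c) &
        exists x, Q x].

Definition in_hull (R : realType) n (t : R) (A : zvec n -> Prop) (F : {fset zvec n}) : Prop :=
  (forall a, a \in F -> A a) /\
  is_face (Pt t A) (in_conv t (fun a => a \in F)).

(* E_t(F) is affinely independent, i.e. conv(E_t(F)) is a simplex with vertex set E_t(F) *)
Definition aff_indep (R : realType) n (t : R) (F : {fset zvec n}) : Prop :=
  forall mu : zvec n -> R,
    \sum_(a <- (F : seq (zvec n))) mu a = 0 ->
    (forall i, \sum_(a <- (F : seq (zvec n))) mu a * Et t a i = 0) ->
    forall a, a \in F -> mu a = 0.

(* Main.v *)
Require Import Defs.
From HB Require Import structures.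
From mathcomp Require Import all_boot all_order all_algebra.
From mathcomp Require Import finmap.
From mathcomp Require Import reals.
From mathcomp Require Import lra zify.
Import Order.TTheory GRing.Theory Num.Theory.
Local Open Scope ring_scope.
Set Implicit Arguments. Unset Strict Implicit.

Lemma bigmax_ge_seq n (s : seq (zvec n)) (x0 : int) i a :
  a \in s -> a i <= \big[Num.max/x0]_(b <- s) b i.
Proof.
elim: s => [//|c s IH]; rewrite inE big_cons => /orP[/eqP->|ain].
  by rewrite le_max lexx.
by rewrite le_max (IH ain) orbT.
Qed.

Lemma bigmax_in_seq n (s : seq (zvec n)) (x0 : int) i :
  (\big[Num.max/x0]_(b <- s) b i = x0) \/ exists2 a, a \in s & \big[Num.max/x0]_(b <- s) b i = a i.
Proof.
elim: s => [|c s IH]; first by left; rewrite big_nil.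
rewrite big_cons; case: IH => [->|[a ain ->]].
  case: (leP x0 (c i)) => h.
    by right; exists c; rewrite ?inE ?eqxx.
  by left.
case: (leP (a i) (c i)) => h.
  by right; exists c; rewrite ?inE ?eqxx.
by right; exists a; rewrite ?inE ?ain ?orbT.
Qed.

Lemma vee_ge n (B : {fset zvec n}) a : a \in B -> zle a (vee B).
Proof. by move=> aB i; rewrite /vee ffunE; apply: bigmax_ge_seq. Qed.

Lemma vee_att n (B : {fset zvec n}) i : B != fset0%fset ->
  exists2 a, a \in B & a i = vee B i.
Proof.
move=> /fset0Pn [x xB]; rewrite /vee ffunE.
have hd : head 0 (B : seq (zvec n)) \in B.
  have : x \in (B : seq (zvec n)) by [].
  suff H : forall s : seq (zvec n), x \in s -> head 0 s \in s by move/H.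
  by case=> //= c s _; rewrite inE eqxx.
case: (bigmax_in_seq (B : seq (zvec n)) ((head 0 (B : seq (zvec n))) i) i) => [->|[a ain ->]].
  by exists (head 0 (B : seq (zvec n))).
by exists a.
Qed.

Lemma vee_char n (B : {fset zvec n}) (m : zvec n) : B != fset0%fset ->
  (forall a, a \in B -> zle a m) -> (forall i, exists2 a, a \in B & a i = m i) ->
  vee B = m.
Proof.
move=> B0 le att; apply/ffunP => i.
apply/eqP; rewrite eq_le; apply/andP; split.
  by have [a aB <-] := vee_att i B0; apply: le.
by have [a aB <-] := att i; apply: vee_ge.
Qed.

Lemma sn_F1 n (A : zvec n -> Prop) sigma b : strongly_neighborly A sigma ->
  A b -> zle b (vee sigma) -> b \in sigma.
Proof.
case=> s0 sA sU Ab le.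
have E : (b |` sigma = sigma)%fset.
  apply: sU.
  - by apply/fset0Pn; exists b; rewrite fsetU11.
  - by move=> a; rewrite in_fset1U => /orP[/eqP->|/sA].
  apply: vee_char => //.
  - by apply/fset0Pn; exists b; rewrite fsetU11.
  - by move=> a; rewrite in_fset1U => /orP[/eqP->//|/vee_ge].
  - move=> i; have [a aS ai] := vee_att i s0.
    by exists a => //; rewrite in_fset1U aS orbT.
by rewrite -E fsetU11.
Qed.

Lemma sn_F2 n (A : zvec n -> Prop) sigma a (i0 : 'I_n) : strongly_neighborly A sigma ->
  a \in sigma -> exists j, a j = vee sigma j.
Proof.
move=> sn aS; case: (boolP [exists j, a j == vee sigma j]).
  by move/existsP=> [j /eqP]; exists j.
rewrite negb_exists => /forallP H.
have att : forall j, exists2 c, c \in (sigma `\ a)%fset & c j = vee sigma j.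
  move=> j; have [c cS cj] := vee_att j (let: And3 s0 _ _ := sn in s0).
  exists c => //; rewrite in_fsetD1 cS andbT.
  by apply: contraTneq (H j) => <-; rewrite negbK cj eqxx.
case: sn => s0 sA sU.
have ne : (sigma `\ a)%fset != fset0%fset.
  by apply/fset0Pn; have [c cS _] := att i0; exists c.
have E : (sigma `\ a = sigma)%fset.
  apply: sU => //.
  - by move=> c; rewrite in_fsetD1 => /andP[_ /sA].
  apply: vee_char => //.
  by move=> c; rewrite in_fsetD1 => /andP[_ /vee_ge].
by move: aS; rewrite -{1}E in_fsetD1 eqxx.
Qed.

Lemma sn_F3 n (A : zvec n -> Prop) sigma a b j : generic A -> strongly_neighborly A sigma ->
  a \in sigma -> b \in sigma -> a j = vee sigma j -> b j = vee sigma j -> a = b.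
Proof.
move=> gen sn aS bS aj bj.
have sA : forall c, c \in sigma -> A c by case: sn.
apply: (gen (vee sigma) _ [set j]) => //.
- move=> c Ac lt.
  have cS : c \in sigma by apply: (sn_F1 sn Ac) => i; apply: ltW.
  have [k ck] := sn_F2 j sn cS.
  by move: (lt k); rewrite ck ltxx.
- by apply/set0Pn; exists j; rewrite inE.
- by apply: sA.
- by apply: sA.
- exact: vee_ge.
- exact: vee_ge.
- by move=> i; rewrite inE => /eqP->.
- by move=> i; rewrite inE => /eqP->.
Qed.

Lemma sn_F4 n (A : zvec n -> Prop) sigma b : strongly_neighborly A sigma ->
  A b -> b \notin sigma -> exists i, vee sigma i < b i.
Proof.
move=> sn Ab bS; case: (boolP [exists i, vee sigma i < b i]).
  by move/existsP.
rewrite negb_exists => /forallP H.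
by move: bS; rewrite (sn_F1 sn Ab) // => i; move: (H i); rewrite -leNgt.
Qed.

Lemma sys_row (R : realType) n (E : 'I_n -> 'I_n -> R) (r x : 'I_n -> R) (t : R) :
  (forall j l, 0 <= E j l <= t^-1) -> (forall j, x j + \sum_l E j l * x l = r j) ->
  forall j, `|x j| <= `|r j| + t^-1 * \sum_l `|x l|.
Proof.
move=> hE hx j.
have -> : x j = r j - \sum_l E j l * x l by rewrite -(hx j) addrK.
apply: (le_trans (ler_normB _ _)); rewrite lerD2l mulr_sumr.
apply: (le_trans (ler_norm_sum _ _ _)); apply: ler_sum => l _.
have /andP[h0 h1] := hE j l.
by rewrite normrM (ger0_norm h0) ler_wpM2r.
Qed.

Lemma sys_sum (R : realType) n (E : 'I_n -> 'I_n -> R) (r x : 'I_n -> R) (t : R) :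
  (forall j l, 0 <= E j l <= t^-1) -> (forall j, x j + \sum_l E j l * x l = r j) ->
  \sum_l `|x l| <= \sum_l `|r l| + n%:R * t^-1 * \sum_l `|x l|.
Proof.
move=> hE hx.
apply: (le_trans (ler_sum _ (fun j _ => sys_row hE hx j))).
by rewrite big_split /= sumr_const card_ord -[_ *+ n]mulr_natl mulrA [n%:R * _]mulrC.
Qed.

Lemma sys_low (R : realType) n (E : 'I_n -> 'I_n -> R) (r x : 'I_n -> R) (t : R) :
  (forall j l, 0 <= E j l <= t^-1) -> (forall j, x j + \sum_l E j l * x l = r j) ->
  forall j, r j - t^-1 * \sum_l `|x l| <= x j.
Proof.
move=> hE hx j.
have -> : x j = r j - \sum_l E j l * x l by rewrite -(hx j) addrK.
rewrite lerD2l lerN2 mulr_sumr; apply: ler_sum => l _.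
have /andP[h0 h1] := hE j l.
apply: (le_trans (ler_norm _)).
by rewrite normrM (ger0_norm h0) ler_wpM2r.
Qed.

Lemma sys_solve (R : realType) n (E : 'I_n -> 'I_n -> R) (r : 'I_n -> R) (t : R) :
  0 < t -> n%:R < t -> (forall j l, 0 <= E j l <= t^-1) ->
  exists x : 'I_n -> R, forall j, x j + \sum_l E j l * x l = r j.
Proof.
move=> t0 nt hE.
pose B : 'M[R]_n := \matrix_(l, j) ((l == j)%:R + E j l).
have rowE : forall v : 'rV[R]_n, forall j, (v *m B) 0 j = v 0 j + \sum_l E j l * v 0 l.
  move=> v j; rewrite !mxE.
  under eq_bigr do rewrite mxE mulrDr.
  rewrite big_split /=; congr (_ + _).
    rewrite (bigD1 j) //= eqxx mulr1 big1 ?addr0 // => l /negPf ->.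
    by rewrite mulr0.
  by apply: eq_bigr => l _; rewrite mulrC.
have uB : B \in unitmx.
  rewrite unitmxE unitfE; apply/negP => /det0P [v v0 vB].
  have hv : forall j, v 0 j + \sum_l E j l * v 0 l = 0.
    by move=> j; rewrite -rowE vB mxE.
  have S : \sum_l `|v 0 l| <= n%:R * t^-1 * \sum_l `|v 0 l|.
    by move: (sys_sum hE hv); rewrite [X in X + _]big1 ?add0r // => l _; rewrite normr0.
  have Sge : 0 <= \sum_l `|v 0 l| by apply: sumr_ge0.
  have lt1 : n%:R * t^-1 < 1 by rewrite ltr_pdivrMr // mul1r.
  have S0 : \sum_l `|v 0 l| = 0.
    apply/eqP; rewrite eq_le Sge andbT.
    have : (1 - n%:R * t^-1) * \sum_l `|v 0 l| <= 0 by rewrite mulrBl mul1r subr_le0.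
    by rewrite pmulr_rle0 // subr_gt0.
  apply/negP: v0; rewrite negbK; apply/eqP/matrixP => i j.
  rewrite ord1 mxE; apply/normr0_eq0.
  by apply: (psumr_eq0P (P := predT) (fun l _ => normr_ge0 (v 0 l)) S0).
pose rv : 'rV[R]_n := \row_j r j.
exists (fun l => (rv *m invmx B) 0 l) => j.
by rewrite -rowE mulmxKV // mxE.
Qed.

Lemma texp_le (R : realType) (t : R) (e : int) : 1 < t -> e < 0 -> t ^ e <= t^-1.
Proof.
by move=> t1 e0; rewrite -exprN1 ler_eXz2l.
Qed.

Lemma texp_ge (R : realType) (t : R) (e : int) : 1 < t -> 0 < e -> t <= t ^ e.
Proof.
by move=> t1 e0; rewrite -{1}(expr1z t) ler_eXz2l.
Qed.

Lemma texp_mul (R : realType) (t : R) (a b : int) : 0 < t -> t ^ (- b) * t ^ a = t ^ (a - b).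
Proof. by move=> t0; rewrite -expfzDr ?gt_eqF // addrC. Qed.

Definition own n (sigma : {fset zvec n}) (j : 'I_n) : zvec n :=
  nth 0 (sigma : seq (zvec n)) (find (fun a : zvec n => a j == vee sigma j) sigma).

Lemma ownP n (sigma : {fset zvec n}) j : sigma != fset0%fset ->
  own sigma j \in sigma /\ own sigma j j = vee sigma j.
Proof.
move=> s0; have [a aS aj] := vee_att j s0.
have hs : has (fun a : zvec n => a j == vee sigma j) sigma.
  by apply/hasP; exists a => //; rewrite aj.
split; first by rewrite /own; apply: mem_nth; rewrite -has_find.
by apply/eqP; apply: (nth_find 0 hs).
Qed.

Lemma own_eq n (A : zvec n -> Prop) sigma a j : generic A -> strongly_neighborly A sigma ->
  a \in sigma -> a j = vee sigma j -> own sigma j = a.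
Proof.
move=> gen sn aS aj; have s0 : sigma != fset0%fset by case: sn.
have [oS oj] := ownP j s0.
exact: (sn_F3 gen sn oS aS oj aj).
Qed.

Lemma own_sum (R : realType) n (A : zvec n -> Prop) sigma j (g : zvec n -> R) :
  generic A -> strongly_neighborly A sigma ->
  \sum_(a <- (sigma : seq (zvec n)) | a j == vee sigma j) g a = g (own sigma j).
Proof.
move=> gen sn; have s0 : sigma != fset0%fset by case: sn.
have [oS oj] := ownP j s0.
rewrite big_seq_cond big_mkcond (bigD1_seq (own sigma j)) ?fset_uniq //= oS oj eqxx big1 ?addr0 //.
move=> a aneq; case: ifP => // /andP[aS /eqP aj].
by case/negP: aneq; apply/eqP; rewrite (own_eq gen sn aS aj).
Qed.

Lemma arith1 (R : realType) (N u t S r x : R) : 1 <= N -> 0 < u -> u * t = 1 ->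
  4*N*N+2 <= t -> 0 <= S -> S <= N + N*u*S -> 1 <= r * N -> r - u * S <= x -> u < x.
Proof.
move=> N1 u0 ut tN S0 SS rN xl.
have Nu0 : 0 <= N * u by nra.
have Nu : N * u * (4*N*N+2) <= N * u * t by apply: ler_wpM2l.
have e : N * u * t = N by rewrite -mulrA ut mulr1.
rewrite e in Nu.
have Nu4 : N * u * 4 <= 1 by nra.
have S2 : S <= 2 * N by nra.
have uS : u * S <= 2 * N * u by nra.
have k : (2*N*N+N) * u < 1 by nra.
nra.
Qed.

Lemma weights (R : realType) n (A : zvec n -> Prop) sigma (t : R) (i0 : 'I_n) :
  generic A -> strongly_neighborly A sigma -> (4 * n * n + 2)%:R <= t ->
  exists w : 'I_n -> R, [/\ forall j, 0 < w j,
     forall a, a \in sigma -> dotR w (Et t a) = 1 &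
     forall b, A b -> b \notin sigma -> 1 < dotR w (Et t b)].
Proof.
move=> gen sn tge.
have s0 : sigma != fset0%fset by case: sn.
set m := vee sigma.
have n0 : (0 < n)%N by apply: leq_ltn_trans (ltn_ord i0).
set N : R := n%:R.
have N1 : 1 <= N by rewrite /N ler1n.
have tN : 4*N*N+2 <= t by move: tge; rewrite natrD !natrM.
have t1 : 1 < t by apply: lt_le_trans tN; nra.
have t0 : 0 < t by apply: lt_trans t1.
have Nt : N < t by nra.
pose cS j : R := \sum_(l | own sigma j l == m l) 1.
have cS1 : forall j, 1 <= cS j.
  move=> j; rewrite /cS (bigD1 j) /=; last by rewrite (ownP j s0).2.
  by rewrite lerDl sumr_ge0.
have cS0 : forall j, 0 < cS j by move=> j; apply: lt_le_trans (cS1 j).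
have cSN : forall j, cS j <= N.
  move=> j; rewrite /cS big_mkcond /N -[n in n%:R]card_ord -sumr_const.
  by apply: ler_sum => l _; case: ifP.
pose E j l : R := if own sigma j l == m l then 0 else t ^ (own sigma j l - m l) / cS j.
have hE : forall j l, 0 <= E j l <= t^-1.
  move=> j l; rewrite /E; case: ifP => h; first by rewrite lexx invr_ge0 ltW.
  have ol : own sigma j l < m l.
    by rewrite lt_neqAle h (vee_ge (ownP j s0).1).
  have e : t ^ (own sigma j l - m l) <= t^-1 by apply: texp_le; rewrite // subr_lt0.
  apply/andP; split; first by rewrite divr_ge0 ?exprz_ge0 ?ltW.
  rewrite ler_pdivrMr //; apply: le_trans e _.
  by rewrite ler_peMr // invr_ge0 ltW.
pose r j := (cS j)^-1.
have [x hx] := sys_solve r t0 Nt hE.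
have Ssum := sys_sum hE hx.
have low := sys_low hE hx.
have Sr : \sum_l `|r l| <= N.
  rewrite /N -[n in n%:R]card_ord -sumr_const; apply: ler_sum => l _.
  by rewrite ger0_norm ?invr_ge0 ?(ltW (cS0 l)) // invf_le1.
have rN : forall j, 1 <= r j * N.
  by move=> j; rewrite /r mulrC ler_pdivlMr // mul1r.
have ut : t^-1 * t = 1 by rewrite mulVf ?gt_eqF.
have xpos : forall j, t^-1 < x j.
  move=> j; apply: (arith1 N1 _ ut tN (sumr_ge0 _ (fun l _ => normr_ge0 (x l))) _ (rN j) (low j)).
    by rewrite invr_gt0.
  apply: le_trans Ssum _; rewrite lerD2r //.
have dotE : forall b, dotR (fun j => t ^ (- m j) * x j) (Et t b) =
    \sum_j x j * t ^ (b j - m j).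
  move=> b; rewrite /dotR /Et; apply: eq_bigr => j _.
  by rewrite mulrAC texp_mul // mulrC.
exists (fun j => t ^ (- m j) * x j); split.
- move=> j; rewrite mulr_gt0 ?exprz_gt0 //.
  by apply: lt_trans (xpos j); rewrite invr_gt0.
- move=> a aS; rewrite dotE (bigID (fun j => a j == m j)) /=.
  have own_a : forall j, a j == m j -> own sigma j = a.
    by move=> j /eqP aj; apply: (own_eq gen sn aS aj).
  pose K := \sum_(l | a l != m l) x l * t ^ (a l - m l).
  have eqj : forall j, a j == m j -> x j + K / cS j = (cS j)^-1.
    move=> j aj.
    suff -> : K / cS j = \sum_l E j l * x l by rewrite hx.
    rewrite /K mulr_suml big_mkcond /=; apply: eq_bigr => l _.
    rewrite /E own_a //; case: (a l == m l) => /=; first by rewrite mul0r.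
    by rewrite [RHS]mulrC mulrA.
  have cSa : forall j, a j == m j -> cS j = \sum_(l | a l == m l) 1.
    by move=> j aj; rewrite /cS own_a.
  set s := \sum_(l | a l == m l) (1 : R).
  have [ja aja] := sn_F2 i0 sn aS.
  have s1 : 1 <= s by rewrite /s -(cSa ja) ?cS1 ?aja //.
  have sn0 : s != 0 by rewrite gt_eqF // (lt_le_trans _ s1).
  have e1 : \sum_(j | a j == m j) x j * t ^ (a j - m j) = \sum_(j | a j == m j) x j.
    by apply: eq_bigr => j /eqP ->; rewrite subrr expr0z mulr1.
  have cst : forall c : R, \sum_(j | a j == m j) c = s * c.
    by move=> c; rewrite /s mulr_suml; apply: eq_bigr => *; rewrite mul1r.
  have e2 : \sum_(j | a j == m j) (x j + K / s) = \sum_(j | a j == m j) s^-1.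
    by apply: eq_bigr => j aj; rewrite /s -(cSa j aj) eqj.
  rewrite big_split /= !cst mulrCA divff // mulr1 in e2.
  by rewrite e1 e2.
- move=> b Ab bS; rewrite dotE.
  have [i hi] := sn_F4 sn Ab bS.
  have xi0 : 0 < x i by apply: lt_trans (xpos i); rewrite invr_gt0.
  rewrite (bigD1 i) //=.
  have rest : 0 <= \sum_(j | j != i) x j * t ^ (b j - m j).
    apply: sumr_ge0 => j _; rewrite mulr_ge0 ?exprz_ge0 ?ltW //.
    by apply: lt_trans (xpos j); rewrite invr_gt0.
  have H : x i * t ^ (b i - m i) <= x i * t ^ (b i - m i) +
     \sum_(j | j != i) x j * t ^ (b j - m j) by rewrite lerDl.
  apply: lt_le_trans H.
  have ti : t <= t ^ (b i - m i) by apply: texp_ge; rewrite // subr_gt0.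
  apply: lt_le_trans (ler_wpM2l (ltW xi0) ti).
  by rewrite -ut ltr_pM2r.
Qed.

Lemma affind (R : realType) n (A : zvec n -> Prop) sigma (t : R) (i0 : 'I_n) :
  generic A -> strongly_neighborly A sigma -> 1 < t -> n%:R < t -> aff_indep t sigma.
Proof.
move=> gen sn t1 nt mu _ hmu a aS.
have s0 : sigma != fset0%fset by case: sn.
have t0 : 0 < t by apply: lt_trans t1.
set m := vee sigma.
set T := \sum_(b <- (sigma : seq (zvec n))) `|mu b|.
have T0 : 0 <= T by apply: sumr_ge0.
have ob : forall j, `|mu (own sigma j)| <= t^-1 * T.
  move=> j; have [oS oj] := ownP j s0.
  have e : \sum_(b <- (sigma : seq (zvec n))) mu b * t ^ (b j - m j) = 0.
    transitivity (t ^ (- m j) * \sum_(b <- (sigma : seq (zvec n))) mu b * Et t b j).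
      rewrite mulr_sumr; apply: eq_bigr => b _.
      by rewrite /Et mulrCA texp_mul.
    by rewrite hmu mulr0.
  rewrite (bigD1_seq (own sigma j)) ?fset_uniq //= oj subrr expr0z mulr1 in e.
  have -> : mu (own sigma j) = - \sum_(b <- (sigma : seq (zvec n)) | b != own sigma j) mu b * t ^ (b j - m j).
    by apply/eqP; rewrite -addr_eq0 e.
  rewrite normrN; apply: (le_trans (ler_norm_sum _ _ _)).
  rewrite /T mulr_sumr [X in _ <= X](bigD1_seq (own sigma j)) ?fset_uniq //=.
  rewrite -[X in X <= _]add0r; apply: lerD; first by rewrite mulr_ge0 ?normr_ge0 ?invr_ge0 ?ltW.
  rewrite big_seq_cond [X in _ <= X]big_seq_cond; apply: ler_sum => b /andP[bS bo].
  rewrite normrM (ger0_norm (exprz_ge0 _ (ltW t0))) mulrC.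
  apply: ler_wpM2r; first exact: normr_ge0.
  apply: texp_le => //; rewrite subr_lt0 lt_neqAle (vee_ge bS) andbT.
  by apply: contra bo => /eqP bj; rewrite (own_eq gen sn bS bj).
have Tle : T <= \sum_j `|mu (own sigma j)|.
  apply: (@le_trans _ _ (\sum_(b <- (sigma : seq (zvec n))) \sum_(j | b j == m j) `|mu b|)).
    rewrite /T big_seq [X in _ <= X]big_seq; apply: ler_sum => b bS.
    have [jb hb] := sn_F2 i0 sn bS.
    rewrite (bigD1 jb) /=; last by rewrite hb.
    by rewrite lerDl sumr_ge0.
  have ex : \sum_(b <- (sigma : seq (zvec n))) \sum_(j | b j == m j) `|mu b| =
      \sum_j \sum_(b <- (sigma : seq (zvec n)) | b j == m j) `|mu b|.
    under eq_bigr do rewrite big_mkcond.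
    rewrite exchange_big; apply: eq_bigr => j _.
    by rewrite [RHS]big_mkcond.
  rewrite ex; apply: ler_sum => j _.
  by rewrite (own_sum _ _ gen sn).
have Tle2 : T <= n%:R * t^-1 * T.
  apply: le_trans Tle _; apply: le_trans (ler_sum _ (fun j _ => ob j)) _.
  by rewrite sumr_const card_ord -[_ *+ n]mulr_natl mulrA.
have lt1 : n%:R * t^-1 < 1 by rewrite ltr_pdivrMr // mul1r.
have Tz : T = 0.
  apply/eqP; rewrite eq_le T0 andbT.
  have : (1 - n%:R * t^-1) * T <= 0 by rewrite mulrBl mul1r subr_le0.
  by rewrite pmulr_rle0 // subr_gt0.
apply/normr0_eq0/eqP; rewrite eq_le normr_ge0 andbT -Tz /T.
rewrite (bigD1_seq a) ?fset_uniq //=.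
by rewrite lerDl sumr_ge0.
Qed.

Lemma dot_conv (R : realType) n (t : R) (w y : 'I_n -> R) (F : {fset zvec n}) (lam : zvec n -> R) :
  (forall i, y i = \sum_(a <- (F : seq (zvec n))) lam a * Et t a i) ->
  dotR w y = \sum_(a <- (F : seq (zvec n))) lam a * dotR w (Et t a).
Proof.
move=> ly; rewrite /dotR.
under eq_bigr do rewrite ly mulr_sumr.
rewrite exchange_big; apply: eq_bigr => a _; rewrite mulr_sumr.
by apply: eq_bigr => i _; rewrite mulrCA.
Qed.

Lemma Q_to_P (R : realType) n (t : R) (A : zvec n -> Prop) (sigma : {fset zvec n}) x :
  (forall a, a \in sigma -> A a) -> in_conv t (fun a => a \in sigma) x -> Pt t A x.
Proof.
move=> sA [F [Fs rest]]; exists x => //.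
by exists F; split => // a /Fs /sA.
Qed.

Lemma Q_single (R : realType) n (t : R) (sigma : {fset zvec n}) a :
  a \in sigma -> in_conv t (fun a => a \in sigma) (Et t a).
Proof.
move=> aS; exists [fset a]%fset; split.
  by move=> b; rewrite inE => /eqP->.
exists (fun _ => 1); split.
- by move=> b _ /=; rewrite ler01.
- exact: (big_seq_fset1 _ a (fun _ => (1:R))).
- by move=> i; rewrite (big_seq_fset1 _ a (fun b => 1 * Et t b i)) mul1r.
Qed.

Lemma transfer (R : realType) n (F sigma : {fset zvec n}) (lam : zvec n -> R) (v : zvec n -> R) :
  (forall a, a \in F -> a \notin sigma -> lam a = 0) ->
  \sum_(a <- (F : seq (zvec n))) lam a * v a =
  \sum_(a <- (sigma : seq (zvec n))) (if a \in F then lam a else 0) * v a.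
Proof.
move=> l0.
transitivity (\sum_(a <- (F : seq (zvec n))) (if a \in F then lam a else 0) * v a).
  by rewrite big_seq [RHS]big_seq; apply: eq_bigr => a ->.
rewrite (big_fset_incl _ (fsubsetUl F sigma)); last first.
  by move=> a _ /negPf ->; rewrite mul0r.
rewrite [RHS](big_fset_incl _ (fsubsetUr F sigma)) //.
move=> a; rewrite in_fsetU => /orP[aF aS|//]; first by rewrite aF l0 // mul0r.
by move=> ->.
Qed.

Lemma face_of_weights (R : realType) n (A : zvec n -> Prop) sigma (t : R) (w : 'I_n -> R) :
  strongly_neighborly A sigma -> (forall j, 0 < w j) ->
  (forall a, a \in sigma -> dotR w (Et t a) = 1) ->
  (forall b, A b -> b \notin sigma -> 1 < dotR w (Et t b)) -> in_hull t A sigma.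
Proof.
move=> sn wpos dS dO.
have sA : forall a, a \in sigma -> A a by case: sn.
have s0 : sigma != fset0%fset by case: sn.
have dge : forall a, A a -> 1 <= dotR w (Et t a).
  move=> a Aa; case: (boolP (a \in sigma)) => aS; first by rewrite dS.
  exact: ltW (dO a Aa aS).
have Pge : forall x y, (forall i, y i <= x i) -> dotR w y <= dotR w x.
  by move=> x y yx; apply: ler_sum => i _; rewrite ler_wpM2l // ltW.
have convge : forall (y : 'I_n -> R) (F : {fset zvec n}) (lam : zvec n -> R), (forall a, a \in F -> A a) ->
    (forall a, a \in F -> 0 <= lam a) -> \sum_(a <- (F : seq (zvec n))) lam a = 1 ->
    (forall i, y i = \sum_(a <- (F : seq (zvec n))) lam a * Et t a i) ->
    1 <= dotR w y.
  move=> y F lam FA l0 l1 ly; rewrite (dot_conv w ly) -{1}l1.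
  rewrite big_seq [X in _ <= X]big_seq; apply: ler_sum => a aF.
  rewrite -{1}[lam a]mulr1; apply: ler_wpM2l; [exact: l0 | exact: dge (FA _ aF)].
split => //; exists w, 1; split.
- by move=> x [y [F [FA [lam [l0 l1 ly]]]] yx]; apply: le_trans (Pge _ _ yx); apply: convge ly.
- move=> x; split.
    move=> Qx; split; first exact: Q_to_P Qx.
    case: Qx => F [Fs [lam [l0 l1 lx]]]; rewrite (dot_conv w lx) -l1.
    by rewrite big_seq [RHS]big_seq; apply: eq_bigr => a aF; rewrite dS ?Fs // mulr1.
  move=> [[y [F [FA [lam [l0 l1 ly]]]] yx] dx].
  have dy1 : dotR w y = 1.
    apply/eqP; rewrite eq_le (convge _ _ _ FA l0 l1 ly) andbT -dx; exact: Pge.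
  have xy : forall i, x i = y i.
    have h : \sum_i w i * (x i - y i) = 0.
      by rewrite (eq_bigr (fun i => w i * x i - w i * y i)) ?sumrB -/(dotR w x) -/(dotR w y) ?dx ?dy1 ?subrr // => i _; rewrite mulrBr.
    have nn : forall j, predT j -> 0 <= w j * (x j - y j).
      by move=> j _; apply: mulr_ge0; [exact: ltW | rewrite subr_ge0].
    move=> i; have := @psumr_eq0P _ _ predT (fun j => w j * (x j - y j)) nn h i isT.
    move/eqP; rewrite mulf_eq0 gt_eqF //= subr_eq0 => /eqP //.
  have lz : forall a, a \in F -> a \notin sigma -> lam a = 0.
    move=> a aF aS.
    have d1 := dO a (FA a aF) aS.
    have hsum : \sum_(b <- (F : seq (zvec n))) lam b * (dotR w (Et t b) - 1) = 0.
      rewrite (eq_bigr (fun b => lam b * dotR w (Et t b) - lam b)); last by move=> b _; rewrite mulrBr mulr1.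
      by rewrite sumrB -(dot_conv w ly) dy1 l1 subrr.
    have : lam a * (dotR w (Et t a) - 1) <= 0.
      rewrite -hsum (bigD1_seq a) ?fset_uniq //= lerDl big_seq_cond.
      apply: sumr_ge0 => b /andP[bF _]; apply: mulr_ge0; first exact: l0.
      by rewrite subr_ge0; apply: dge; apply: FA.
    rewrite pmulr_lle0 ?subr_gt0 // => la.
    by apply/eqP; rewrite eq_le la l0.
  exists sigma; split => //; exists (fun a => if a \in F then lam a else 0); split.
  - by move=> a _; case: ifP => aF //; apply: l0.
  - have := transfer (fun _ => (1 : R)) lz.
    under eq_bigr do rewrite mulr1.
    under [X in _ = X -> _]eq_bigr do rewrite mulr1.
    by move=> <-.
  - by move=> i; rewrite xy ly; apply: transfer.
- by have /fset0Pn [a aS] := s0; exists (Et t a); apply: Q_single.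
Qed.

Lemma zvec0_eq (a b : zvec 0) : a = b.
Proof. by apply/ffunP => -[]. Qed.

Unset Implicit Arguments.

Theorem mainTheorem2 (R : realType) (n : nat) (L A : zvec n -> Prop) :
  antichain_lattice L -> generic A -> lattice_finite L A ->
  exists t0 : R, 1 < t0 /\
    forall t : R, t0 <= t ->
    forall sigma : {fset zvec n}, strongly_neighborly A sigma ->
      in_hull t A sigma /\ aff_indep t sigma.
Proof.
move=> _ gen _.
case: n L A gen => [|n] L A gen.
  exists 2; split; first by rewrite ltr1n.
  move=> t _ sigma sn.
  have sA : forall a, a \in sigma -> A a by case: sn.
  have s0 : sigma != fset0%fset by case: sn.
  have /fset0Pn [a aS] := s0.
  split.
    split => //; exists (fun _ => 0), 0; split.
    - by move=> x _; rewrite /dotR big_ord0.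
    - move=> x; split.
        by move=> Qx; split; [exact: Q_to_P Qx | rewrite /dotR big_ord0].
      move=> _; have := Q_single t aS; case=> F [Fs [lam [l0 l1 _]]].
      by exists F; split => //; exists lam; split => // -[].
    - by exists (Et t a); apply: Q_single.
  move=> mu hs _ b bS.
  have E : sigma = [fset a]%fset.
    by apply/fsetP => c; rewrite inE (zvec0_eq c a) aS eqxx.
  by move: hs; rewrite E big_seq_fset1 (zvec0_eq b a).
have i0 : 'I_n.+1 := ord0.
exists (4 * n.+1 * n.+1 + 2)%:R; split; first by rewrite ltr1n; lia.
move=> t tge sigma sn.
have t1 : 1 < t by apply: lt_le_trans tge; rewrite ltr1n; lia.
have nt : n.+1%:R < t.
  apply: lt_le_trans tge; rewrite ltr_nat; lia.
have [w [wpos dS dO]] := weights i0 gen sn tge.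
split; first exact: (face_of_weights sn wpos dS dO).
exact: (affind i0 gen sn t1 nt).
Qed.
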